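(* For every $\tau\ge0$, let $\rho_\tau=\{(x,v)\in\mathcal{H}:v=\tau\}$. Then $d_H((0,1),\rho_\tau):=\inf_{P\in\rho_\tau}d_H((0,1),P)=2|\sqrt\tau-1|$.
   Context: Let $\mathcal{H}=\{(x,v)\in\mathbb{R}^2:v\ge0\}$ and let $d_H$ be the Riemannian distance on $\mathcal{H}$ induced by the metric $ds^2=v^{-1}(dx^2+dv^2)$ on the open upper half-plane (extended to the boundary $v=0$). *)

(* Defs.v *)
From HB Require Import structures.
From mathcomp Require Import all_boot all_order all_algebra.
From mathcomp Require Import all_classical all_reals all_analysis.
Set Implicit Arguments. Unset Strict Implicit. Unset Printing Implicit Defensive.
Import Order.TTheory GRing.Theory Num.Theory.
Import numFieldNormedType.Exports.
Local Open Scope classical_set_scope.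
Local Open Scope ring_scope.

Definition halfplane (R : realType) : set (R * R) := [set P | 0 <= P.2].

Definition admissible_curve (R : realType) (x v : R -> R) : Prop :=
  {within `[0, 1]%classic, continuous x} /\
  {within `[0, 1]%classic, continuous v} /\
  (forall t : R, 0 < t < 1 ->
     [/\ derivable x t 1, derivable v t 1,
         {for t, continuous (derive1 x)}, {for t, continuous (derive1 v)} & 0 < v t]).

(* Riemannian length for ds^2 = v^{-1}(dx^2 + dv^2). *)
Definition hyp_speed (R : realType) (x v : R -> R) (t : R) : R :=
  Num.sqrt ((derive1 x t) ^+ 2 + (derive1 v t) ^+ 2) / Num.sqrt (v t).

Definition hyp_length (R : realType) (x v : R -> R) : \bar R :=
  (\int[@lebesgue_measure R]_(t in `]0%R, 1%R[%classic) (hyp_speed x v t)%:E)%E.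

Definition dH (R : realType) (P Q : R * R) : \bar R :=
  ereal_inf [set l : \bar R | exists x v : R -> R,
     [/\ admissible_curve x v, (x 0, v 0) = P, (x 1, v 1) = Q
        & l = hyp_length x v]].

Definition rho (R : realType) (tau : R) : set (R * R) :=
  [set P : R * R | halfplane P /\ P.2 = tau].

Definition dH_set (R : realType) (P : R * R) (A : set (R * R)) : \bar R :=
  ereal_inf [set dH P Q | Q in A].

(* Main.v *)
Require Import Defs.
From HB Require Import structures.
From mathcomp Require Import all_boot all_order all_algebra.
From mathcomp Require Import all_classical all_reals all_analysis.
From mathcomp Require Import lra ring measurable_realfun.
Import Order.TTheory GRing.Theory Num.Theory.
Import numFieldNormedType.Exports.
Local Open Scope classical_set_scope.
Local Open Scope ring_scope.

Lemma lim_bound (R : realType) (F : R -> R) (r : R) :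
  {within `[0, 1], continuous F} ->
  (forall a b, 0 < a -> a < b -> b < 1 -> `|F b - F a| <= r) ->
  `|F 1 - F 0| <= r.
Proof.
move=> cF H; have [_ c0 c1] := (continuous_within_itvP _ ltr01).1 cF.
apply/ler_addgt0Pr => e e0.
have e2 : 0 < e / 2 by lra.
move/cvgrPdist_lt : c0 => /(_ _ e2) N0.
move/cvgrPdist_lt : c1 => /(_ _ e2) N1.
have : \forall t \near 0^'+, 0 < t /\ t < 1/2 /\ `|F 0 - F t| < e/2.
  near=> t; split; first by near: t; exact: nbhs_right_gt.
  split; last by near: t; exact: N0.
  by near: t; apply: nbhs_right_lt; lra.
move=> /filter_ex [a [a0 [a1 Ha]]].
have : \forall t \near 1^'-, 1/2 < t /\ t < 1 /\ `|F 1 - F t| < e/2.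
  near=> t; split; first by near: t; apply: nbhs_left_gt; lra.
  split; last by near: t; exact: N1.
  by near: t; exact: nbhs_left_lt.
move=> /filter_ex [b [b0 [b1 Hb]]].
have := H a b a0 ltac:(lra) b1.
have := ler_distD (F b) (F 1) (F 0).
have := ler_distD (F a) (F b) (F 0).
rewrite (distrC (F a)); lra.
Unshelve. all: by end_near.
Qed.
Lemma dF (R : realType) (v : R -> R) t : derivable v t 1 -> 0 < v t ->
  is_derive t 1 (fun s => 2 * Num.sqrt (v s)) (derive1 v t / Num.sqrt (v t)).
Proof.
move=> dv vt.
have hs : is_derive (v t) 1 (fun y : R => 2 * Num.sqrt y) (2 * (2 * Num.sqrt (v t))^-1).
  exact: (@is_deriveZ R R R Num.sqrt 2 (v t) 1 _ (is_derive1_sqrt vt)).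
have hv : is_derive t 1 v (derive1 v t).
  by apply: DeriveDef => //; rewrite derive1E.
have := is_derive1_comp hs hv.
have st : 0 < Num.sqrt (v t) by rewrite sqrtr_gt0.
have -> : 2 * (2 * Num.sqrt (v t))^-1 * derive1 v t = derive1 v t / Num.sqrt (v t).
  by field; rewrite gt_eqF.
by [].
Qed.

Lemma cont_v (R : realType) (v : R -> R) t : derivable v t 1 -> {for t, continuous v}.
Proof. by move=> dv; apply/differentiable_continuous/derivable1_diffP. Qed.

Lemma cont_sq (R : realType) (v : R -> R) t : {for t, continuous v} ->
  {for t, continuous (fun s => Num.sqrt (v s))}.
Proof. by move=> cv; apply: (continuous_comp cv); exact: sqrt_continuous. Qed.

Lemma cont_w (R : realType) (v : R -> R) t : derivable v t 1 ->
  {for t, continuous (derive1 v)} -> 0 < v t ->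
  {for t, continuous (fun s => derive1 v s / Num.sqrt (v s))}.
Proof.
move=> dv cd vt; apply: continuousM => //; apply: continuousV.
  by rewrite gt_eqF // sqrtr_gt0.
exact/cont_sq/cont_v.
Qed.

Lemma cont_speed (R : realType) (x v : R -> R) t : derivable v t 1 ->
  {for t, continuous (derive1 x)} ->
  {for t, continuous (derive1 v)} -> 0 < v t ->
  {for t, continuous (hyp_speed x v)}.
Proof.
move=> dv cx cd vt; apply: continuousM => //.
  apply: (@cont_sq _ (fun s => derive1 x s ^+ 2 + derive1 v s ^+ 2)).
  by apply: continuousD; apply: continuousM.
apply: continuousV; first by rewrite gt_eqF // sqrtr_gt0.
exact/cont_sq/cont_v.
Qed.

Lemma lower (R : realType) (x v : R -> R) : admissible_curve x v ->
  ((2 * `|Num.sqrt (v 1) - Num.sqrt (v 0)|)%:E <= hyp_length x v)%E.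
Proof.
case=> cx [cv H].
pose F : R -> R := fun s => 2 * Num.sqrt (v s).
pose w : R -> R := fun s => derive1 v s / Num.sqrt (v s).
pose sp := hyp_speed x v.
have csp : {in `]0, 1[, continuous sp}.
  move=> t; rewrite in_itv /= => /H [_ dv cdx cdv vt].
  exact: cont_speed.
have cw : {in `]0, 1[, continuous w}.
  move=> t; rewrite in_itv /= => /H [_ dv cdx cdv vt].
  exact: cont_w.
have msp : measurable_fun (`]0, 1[%classic : set R) sp.
  apply: measurable_realfun.open_continuous_measurable_fun; first exact: interval_open.
  by move=> t; rewrite inE; apply: csp.
have mw : measurable_fun (`]0, 1[%classic : set R) w.
  apply: measurable_realfun.open_continuous_measurable_fun; first exact: interval_open.
  by move=> t; rewrite inE; apply: cw.
have sp0 t : 0 <= sp t by rewrite /sp /hyp_speed divr_ge0 // sqrtr_ge0.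
have Hab a b : 0 < a -> a < b -> b < 1 ->
    ((`|F b - F a|)%:E <= hyp_length x v)%E.
  move=> a0 ab b1.
  have sub : `[a, b] `<=` `]0, 1[.
    by move=> t /=; rewrite !in_itv /= => /andP[ta tb]; apply/andP; split; lra.
  have inab t : t \in `]a, b[ -> 0 < t < 1.
    by rewrite in_itv /= => /andP[ta tb]; apply/andP; split; lra.
  have cwab : {within `[a, b], continuous w}.
    apply: continuous_in_subspaceT => t; rewrite inE => /sub tin.
    by apply: cw; rewrite inE.
  have dF' (t : R) : 0 < t < 1 -> is_derive t 1 F (w t).
    by move/H => [_ dv _ _ vt]; exact: dF.
  have dFab : derivable_oo_LRcontinuous F a b.
    split.
    - by move=> t /inab /dF' d; exact: ex_derive.
    - apply: cvg_at_right_filter; apply: cont_v; apply: ex_derive; apply: dF'.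
      by apply/andP; split; lra.
    - apply: cvg_at_left_filter; apply: cont_v; apply: ex_derive; apply: dF'.
      by apply/andP; split; lra.
  have F'w : {in `]a, b[, (F^`())%classic =1 w}.
    by move=> t /inab /dF' d; rewrite derive1E; exact: derive_val.
  have := continuous_FTC2 ab cwab dFab F'w.
  rewrite -EFinB => eq.
  have mab : measurable (`[a, b]%classic : set R) by [].
  have mwab : measurable_fun (`[a, b]%classic : set R) (fun t => (w t)%:E).
    by apply/measurable_EFinP; exact: measurable_funS mw.
  have mspab : measurable_fun (`[a, b]%classic : set R) (fun t => (sp t)%:E).
    by apply/measurable_EFinP; exact: measurable_funS msp.
  have h1 : (`|F b - F a|%:E = `|\int[lebesgue_measure]_(t in `[a, b]) (w t)%:E|)%E.
    by rewrite eq.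
  have h2 := le_abse_integral lebesgue_measure mab mwab.
  have h3 : (\int[lebesgue_measure]_(t in `[a, b]) `|(w t)%:E|
      <= \int[lebesgue_measure]_(t in `[a, b]) (sp t)%:E)%E.
    apply: ge0_le_integral.
    - exact: mab.
    - by move=> t _; exact: abse_ge0.
    - exact: (measurableT_comp (@abse_measurable R setT) mwab).
    - exact: mspab.
    - move=> t /sub; rewrite /= in_itv /= => /andP[t0 t1].
      rewrite /= lee_fin /w /sp /hyp_speed.
      rewrite normrM normfV (ger0_norm (sqrtr_ge0 _)).
      apply: ler_wpM2r; first by rewrite invr_ge0 sqrtr_ge0.
      rewrite -sqrtr_sqr; apply: ler_wsqrtr.
      have := sqr_ge0 (derive1 x t); lra.
  have h4 : (\int[lebesgue_measure]_(t in `[a, b]) (sp t)%:E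
      <= hyp_length x v)%E.
    apply: ge0_subset_integral => //.
    - by apply/measurable_EFinP.
    - by move=> t _; rewrite lee_fin.
  by rewrite h1; apply: (le_trans h2); apply: (le_trans h3).
have L0 : (0 <= hyp_length x v)%E.
  by apply: integral_ge0 => t _; rewrite lee_fin.
have cF : {within `[0, 1], continuous F}.
  have gc : continuous (fun y : R => 2 * Num.sqrt y).
    move=> y; have h := continuousM (@cst_continuous R R 2 y) (@sqrt_continuous R y).
    exact: h.
  move=> t; have := continuous_comp (cv t) (gc (v t)).
  exact.
move: L0 Hab; case: (hyp_length x v) => [r L0 Hab| |]; last 2 first.
- by move=> _ _; rewrite leey.
- by [].
rewrite lee_fin.
have := @lim_bound R F r cF (fun a b a0 ab b1 => ltac:(by rewrite -lee_fin; apply: Hab)).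
by rewrite /F -mulrBr normrM (ger0_norm (ler0n _ 2)).
Qed.

Lemma dq (R : realType) (c t : R) :
  is_derive t 1 (fun u : R => 1 + u * c) c.
Proof.
have h1 := @is_derive_cst R R R 1 t 1.
have h2 := @is_deriveM R R id (cst c) t 1 _ _ (is_derive_id t 1) (@is_derive_cst R R R c t 1).
have h := is_deriveD h1 h2.
apply: (is_derive_eq h).
by rewrite scaler0 !add0r /cst scaler1.
Qed.

Lemma dv (R : realType) (c t : R) :
  is_derive t 1 (fun u : R => (1 + u * c) ^+ 2) (2 * (1 + t * c) * c).
Proof.
have h := is_deriveX 2 (@dq R c t).
have e : ((2%:R * (1 + t * c) ^+ 2.-1) *: c) = 2 * (1 + t * c) * c.
  by rewrite /GRing.scale /=; ring.
apply: (is_derive_eq h).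
rewrite /GRing.scale /=; ring.
Qed.

Lemma upper (R : realType) (tau : R) : 0 <= tau ->
  (dH (0%R, 1%R) (0%R, tau) <= (2 * `|Num.sqrt tau - 1|)%:E)%E.
Proof.
move=> htau.
set s := Num.sqrt tau; set c := s - 1.
pose x : R -> R := fun=> 0.
pose v : R -> R := fun u => (1 + u * c) ^+ 2.
have dv' (u : R) : is_derive u 1 v (2 * (1 + u * c) * c) := @dv R c u.
have Dv : derive1 v = (fun u => 2 * (1 + u * c) * c).
  by apply/funext => u; rewrite derive1E; exact: derive_val.
have Dx : derive1 x = (fun=> 0).
  by apply/funext => u; exact: derive1_cst.
have pos (u : R) : 0 <= u -> u < 1 -> 0 < 1 + u * c.
  move=> u0 u1; have := mulr_ge0 u0 (sqrtr_ge0 tau).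
  rewrite /c mulrBr mulr1 -/s; lra.
apply: ge_ereal_inf; exists (2 * `|c|)%:E => //.
exists x, v; split.
- split; first by apply: continuous_subspaceT => u; exact: cst_continuous.
  split.
    by apply: continuous_subspaceT => u; apply: cont_v; apply: ex_derive; apply: dv'.
  move=> t /andP[t0 t1]; split.
  + apply: ex_derive; exact: (@is_derive_cst R R R 0 t 1).
  + apply: ex_derive; apply: dv'.
  + by rewrite Dx; exact: cst_continuous.
  + rewrite Dv.
    have cq : {for t, continuous (fun u : R => 1 + u * c)}.
      apply: cont_v; apply: ex_derive; exact: (@dq R c t).
    have h1 := continuousM (@cst_continuous R R 2 t) cq.
    have h2 := continuousM h1 (@cst_continuous R R c t).
    exact: h2.
  + by rewrite /v exprn_gt0 // pos // ltW.
- by rewrite /x /v mul0r addr0 expr1n.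
- by rewrite /x /v mul1r /c addrC subrK sqr_sqrtr.
- rewrite /hyp_length (@eq_integral _ _ _ _ _ (fun=> (2 * `|c|)%:E)).
    rewrite integral_cst //= lebesgue_measure_itv /=.
    by rewrite lte01 oppr0 adde0 mule1.
  move=> u; rewrite inE /= in_itv /= => /andP[u0 u1].
  congr EFin; rewrite /hyp_speed Dx Dv /v expr0n add0r !sqrtr_sqr.
  have qp := pos u (ltW u0) u1.
  rewrite !normrM (gtr0_norm qp) (ger0_norm (ler0n _ 2)).
  by field; rewrite gt_eqF.
Qed.

Theorem theorem2p4 (R : realType) (tau : R) (htau : 0 <= tau) :
  dH_set (0, 1) (rho tau) = (2 * `|Num.sqrt tau - 1|)%:E.
Proof.
apply/eqP; rewrite eq_le; apply/andP; split.
  apply: ge_ereal_inf; exists (dH (0%R, 1%R) (0%R, tau)); last exact: upper.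
  by exists (0%R, tau).
apply: le_ereal_inf_tmp => _ [Q [hQ hQ2] <-].
apply: le_ereal_inf_tmp => _ [x [v [adm e0 e1 ->]]].
have := @lower R x v adm.
have -> : v 0 = 1 by case: e0.
have -> : v 1 = tau by rewrite -hQ2 -e1.
by rewrite sqrtr1.
Qed.
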